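(* Let $\rho:\mathbb{Z}_{\ge 0}\to[0,1]$ be a mapping probability with $\rho(i)=o(1/i)$ as $i\to\infty$, and let $\sigma>0$. Suppose that $m=m(|S|)$ is such that, for a random set $S$ of source symbols, with probability $\sigma$ there exist at least $|S|$ non-empty coded symbols among the first $m$ coded symbols (indices $0,1,\dots,m-1$). Then $m=\omega(|S|)$, i.e., for every $\eta>0$ there exists $|S|_0$ such that $m>\eta|S|$ whenever $|S|>|S|_0$.
   Context: Model: a set $S$ of source symbols is encoded into an infinite sequence of coded symbols indexed by $i=0,1,2,\dots$. Each source symbol is mapped to the $i$-th coded symbol with probability $\rho(i)$ (the mapping probability), independently across source symbols and across indices. A coded symbol is non-empty if at least one source symbol is mapped to it. *)

(* Defs.v *)
From mathcomp Require Import all_boot all_order all_algebra.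
From mathcomp Require Import reals.
Set Implicit Arguments. Unset Strict Implicit. Unset Printing Implicit Defensive.
Import Order.TTheory GRing.Theory Num.Theory.
Local Open Scope ring_scope.

(* An outcome of the random mapping of n source symbols onto the first m coded
   symbols: X (s, i) = true iff source symbol s is mapped to coded symbol i. *)
Definition mapping_outcome (n m : nat) := {ffun 'I_n * 'I_m -> bool}.

Definition nonempty_coded (n m : nat) (X : mapping_outcome n m) : {set 'I_m} :=
  [set i : 'I_m | [exists s : 'I_n, X (s, i)]].

Definition outcome_prob (R : realType) (rho : nat -> R) (n m : nat)
    (X : mapping_outcome n m) : R :=
  \prod_(p : 'I_n * 'I_m) (if X p then rho p.2 else 1 - rho p.2).

Definition prob_enough_nonempty (R : realType) (rho : nat -> R) (n m : nat) : R :=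
  \sum_(X : mapping_outcome n m | (n <= #|nonempty_coded X|)%N)
     outcome_prob rho X.

Definition little_o_inv (R : realType) (rho : nat -> R) : Prop :=
  forall eps : R, 0 < eps -> exists N : nat, forall i : nat,
    (N <= i)%N -> i%:R * rho i <= eps.

(* Main.v *)
Require Import Defs.
From mathcomp Require Import all_boot all_order all_algebra.
From mathcomp Require Import reals.
From mathcomp Require Import zify ring lra.
Import Order.TTheory GRing.Theory Num.Theory.
Local Open Scope ring_scope.

Lemma card_lt (m k : nat) : (#|[set i : 'I_m | (i < k)%N]| <= k)%N.
Proof.
case: (leqP m k) => hmk.
  by apply: leq_trans (max_card _) _; rewrite card_ord.
have hkm : (k <= m)%N by apply: ltnW.
apply: leq_trans (_ : #|[set widen_ord hkm x | x in 'I_k]| <= k)%N.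
  apply: subset_leq_card; apply/subsetP => i; rewrite inE => hi.
  by apply/imsetP; exists (Ordinal hi) => //; apply: val_inj.
by apply: leq_trans (leq_imset_card _ _) _; rewrite card_ord.
Qed.
Lemma ne_bound n m k (X : mapping_outcome n m) :
  (#|nonempty_coded X| <= k + #|[set p : 'I_n * 'I_m | X p && (k <= p.2)%N]|)%N.
Proof.
set B := [set p : 'I_n * 'I_m | X p && (k <= p.2)%N].
apply: leq_trans (_ : #|[set i : 'I_m | (i < k)%N] :|: [set p.2 | p in B]| <= _)%N.
  apply: subset_leq_card; apply/subsetP => i; rewrite !inE => /existsP [s hs].
  case: (ltnP i k) => hik //=.
  by apply/imsetP; exists (s, i) => //; rewrite inE hs hik.
rewrite cardsU; apply: leq_trans (leq_subr _ _) _.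
by apply: leq_add; [exact: card_lt | exact: leq_imset_card].
Qed.
Lemma marginal (R : realType) (rho : nat -> R) n m (p0 : 'I_n * 'I_m) :
  \sum_(X : mapping_outcome n m) outcome_prob rho X * (X p0)%:R = rho p0.2.
Proof.
pose F (p : 'I_n * 'I_m) (b : bool) : R :=
  (if b then rho p.2 else 1 - rho p.2) * (if p == p0 then (b : nat)%:R else 1).
have := @bigA_distr_bigA R 0 1 *%R +%R _ _ F.
rewrite (bigD1 p0) //= big_bool /F /= eqxx mulr1 mulr0 addr0.
rewrite big1 ?mulr1; last first.
  by move=> p hp; rewrite big_bool /= (negPf hp) !mulr1 addrC subrK.
move=> ->; apply: eq_bigr => X _.
rewrite /outcome_prob (bigD1 p0) //= [in RHS](bigD1 p0) //= eqxx.
rewrite -!mulrA; congr (_ * _); rewrite mulrC; congr (_ * _).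
by apply: eq_bigr => p hp; rewrite (negPf hp) mulr1.
Qed.

Lemma prob_ge0 (R : realType) (rho : nat -> R) n m (X : mapping_outcome n m) :
  (forall i, 0 <= rho i <= 1) -> 0 <= outcome_prob rho X.
Proof.
move=> h; apply: prodr_ge0 => p _; case: (X p); have /andP[h0 h1] := h p.2 => //.
by rewrite subr_ge0.
Qed.
Lemma cardZ (R : realType) n m k (X : mapping_outcome n m) :
  (#|[set p : 'I_n * 'I_m | X p && (k <= p.2)%N]|)%:R =
  \sum_(p : 'I_n * 'I_m | (k <= p.2)%N) (X p)%:R :> R.
Proof.
rewrite -sum1_card natr_sum big_mkcond [RHS]big_mkcond /=.
by apply: eq_bigr => p _; rewrite inE; case: (X p); case: (k <= p.2)%N.
Qed.

Lemma markov (R : realType) (rho : nat -> R) n m k :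
  (forall i, 0 <= rho i <= 1) ->
  (n - k)%:R * prob_enough_nonempty rho n m <=
  \sum_(p : 'I_n * 'I_m | (k <= p.2)%N) rho p.2.
Proof.
move=> hr; rewrite /prob_enough_nonempty mulr_sumr.
apply: le_trans (_ : \sum_(X : mapping_outcome n m | (n <= #|nonempty_coded X|)%N)
   outcome_prob rho X * (#|[set p : 'I_n * 'I_m | X p && (k <= p.2)%N]|)%:R <= _).
  apply: ler_sum => X hX; rewrite mulrC; apply: ler_wpM2l; first exact: prob_ge0.
  rewrite ler_nat; have := @ne_bound n m k X; lia.
apply: le_trans (_ : \sum_(X : mapping_outcome n m)
   outcome_prob rho X * (#|[set p : 'I_n * 'I_m | X p && (k <= p.2)%N]|)%:R <= _).
  rewrite [X in _ <= X](bigID (fun X : mapping_outcome n m => (n <= #|nonempty_coded X|)%N)) /=.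
  rewrite lerDl; apply: sumr_ge0 => X _; apply: mulr_ge0; [exact: prob_ge0|exact: ler0n].
under eq_bigr => X _ do rewrite cardZ mulr_sumr.
rewrite exchange_big /=; rewrite le_eqVlt; apply/orP; left; apply/eqP; apply: eq_bigr => p _.
exact: marginal.
Qed.

Lemma tailbound (R : realType) (rho : nat -> R) n m k (eps : R) :
  (forall i, 0 <= rho i <= 1) -> (forall i : nat, (k <= i)%N -> i%:R * rho i <= eps) ->
  k%:R * \sum_(p : 'I_n * 'I_m | (k <= p.2)%N) rho p.2 <= (n * m)%:R * eps.
Proof.
move=> hr he; rewrite mulr_sumr.
apply: le_trans (_ : \sum_(p : 'I_n * 'I_m) eps <= _).
  rewrite [X in _ <= X](bigID (fun p : 'I_n * 'I_m => (k <= p.2)%N)) /=.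
  have h0 : 0 <= eps by have := he k (leqnn k); have /andP[? _] := hr k; have := ler0n R k; nra.
  apply: ler_wpDr; first by apply: sumr_ge0.
  apply: ler_sum => p hp; apply: le_trans (he _ hp).
  apply: ler_wpM2r; first by have /andP[] := hr p.2.
  by rewrite ler_nat.
by rewrite sumr_const card_prod !card_ord mulr_natl.
Qed.
Lemma natfact (N n : nat) : (2 * N + 2 < n)%N ->
  [/\ (N <= n./2)%N, (1 <= n./2)%N & (n ^ 2 < 8 * (n - n./2) * n./2)%N].
Proof.
move=> h; have e := odd_double_half n.
set k := n./2 in e *.
rewrite -e in h *; case: (odd n) h => /= h; rewrite -?addnn in h *; split; nia.
Qed.
Lemma realfact (R : realType) (sigma eta eps P S a b c M : R) :
  0 < sigma -> 0 < eta -> sigma <= P -> 0 <= a -> 0 <= b -> 0 <= c ->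
  a * P <= S -> b * S <= c * M * eps -> M <= eta * c -> eps * (8 * eta) = sigma ->
  c ^+ 2 < 8 * a * b -> False.
Proof.
move=> hs he hP ha hb hc h1 h2 h3 h4 h5.
have hab : 0 <= a * b by apply: mulr_ge0.
have h6a : sigma * (a * b) <= P * (a * b) by apply: ler_wpM2r.
have h6b : b * (a * P) <= b * S by apply: ler_wpM2l.
have heps : 0 <= eps by nra.
have hce : 0 <= c * eps by apply: mulr_ge0.
have h7 : (c * eps) * M <= (c * eps) * (eta * c) by apply: ler_wpM2l.
have h8 : c * M * eps <= sigma / 8 * c ^+ 2.
  rewrite -h4; have -> : eps * (8 * eta) / 8 * c ^+ 2 = (c * eps) * (eta * c) by field.
  by rewrite mulrAC.
have h9 : sigma * c ^+ 2 < sigma * (8 * a * b) by rewrite ltr_pM2l.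
lra.
Qed.

Theorem lemma4p2 (R : realType) (rho : nat -> R) (sigma : R) (m : nat -> nat) :
  (forall i, 0 <= rho i <= 1) ->
  little_o_inv rho ->
  0 < sigma ->
  (forall n : nat, sigma <= prob_enough_nonempty rho n (m n)) ->
  forall eta : R, 0 < eta -> exists n0 : nat, forall n : nat,
    (n0 < n)%N -> eta * n%:R < (m n)%:R.
Proof.
move=> hr ho hs hP eta he.
pose eps := sigma / (8 * eta).
have heps : 0 < eps by rewrite /eps divr_gt0 // mulr_gt0.
have [N hN] := ho eps heps.
exists (2 * N + 2)%N => n hn.
rewrite ltNge; apply/negP => hm.
have [h1 h2 h3] := @natfact N n hn.
set k := n./2 in h1 h2 h3.
have hk : (k <= n)%N by rewrite /k -{2}(odd_double_half n); lia.
apply: (@realfact R sigma eta eps (prob_enough_nonempty rho n (m n))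
  (\sum_(p : 'I_n * 'I_(m n) | (k <= p.2)%N) rho p.2)
  (n - k)%:R k%:R n%:R (m n)%:R) => //.
- exact: markov.
- rewrite -natrM; apply: tailbound => // i hi; apply: hN; lia.
- by rewrite /eps divfK // mulf_neq0 // gt_eqF.
- by rewrite -natrX -!natrM ltr_nat.
Qed.
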